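(* Let $N+1\ge 10$ and $m=\lfloor (N+1)/10\rfloor$. Let $\rho_1,\dots,\rho_{N+1}$ be a multiset of transfer exponents to a target $\mathcal{D}$ (with common constant $C_\rho$), ordered as $\rho_{(1)}\le\dots\le\rho_{(N+1)}$, and let $P_1,\dots,P_{N+1}$ be distributions such that $P_t$ has transfer exponent $\rho_t$ to $\mathcal{D}$; let $P_{(t)}$ denote the distribution with exponent $\rho_{(t)}$. Draw $i_1,\dots,i_{N+1}$ i.i.d. from $\mathrm{Unif}(\{1,\dots,m\})$ and set $Q_t=P_{(i_t)}$. Then with probability at least $0.97$ there exists a permutation $\pi$ of $[N+1]$ with $i_{\pi(t)}\le t$ for all $t\in[N+1]$; in particular, on this event $Q_{\pi(t)}$ has transfer exponent $\rho_{(t)}$ to $\mathcal{D}$ for every $t$, i.e. some permutation of $Q_1,\dots,Q_{N+1}$ admits the transfer exponents $\rho_{(1)},\dots,\rho_{(N+1)}$.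
   Context: A distribution $P$ has transfer exponent $\rho>0$ to $\mathcal{D}$ with respect to a concept class $\mathcal{H}$ (with constant $C_\rho\ge2$) if $\mathcal{E}_{\mathcal{D}}(h)\le C_\rho(\mathcal{E}_P(h))^{1/\rho}$ for all $h\in\mathcal{H}$, where $\mathcal{E}_P(h)=\mathrm{er}_P(h)-\inf_{h'\in\mathcal{H}}\mathrm{er}_P(h')$ and $\mathrm{er}_P(h)=P\{(x,y):h(x)\ne y\}$. *)

(* Defs.v *)
From HB Require Import structures.
From mathcomp Require Import all_boot all_order all_algebra all_fingroup.
From mathcomp Require Import all_classical all_reals all_analysis.
Set Implicit Arguments. Unset Strict Implicit. Unset Printing Implicit Defensive.
Import Order.TTheory GRing.Theory Num.Theory.
Local Open Scope classical_set_scope.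
Local Open Scope ring_scope.

Section Transfer.
Context {d : measure_display} {X : measurableType d} {R : realType}.

Definition er (P : probability (X * bool)%type R) (h : X -> bool) : R :=
  fine (P [set xy | h xy.1 != xy.2]).

Definition excess (H : set (X -> bool)) (P : probability (X * bool)%type R)
  (h : X -> bool) : R :=
  er P h - inf [set er P h' | h' in H].

Definition has_transfer_exponent (H : set (X -> bool)) (C : R)
  (P D : probability (X * bool)%type R) (rho : R) : Prop :=
  0 < rho /\ 2 <= C /\
  forall h, H h -> excess H D h <= C * powR (excess H P h) (rho^-1).
End Transfer.

(* Main.v *)
Require Import Defs.
From HB Require Import structures.
From mathcomp Require Import all_boot all_order all_algebra all_fingroup.
From mathcomp Require Import all_classical all_reals all_analysis.
From mathcomp Require Import zify ring lra.
Import Order.TTheory GRing.Theory Num.Theory.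
Set Implicit Arguments. Unset Strict Implicit.

Section Comb.
Variables (n m : nat) (i : {ffun 'I_n -> 'I_m}).
Let k (s : 'I_n) := i s * n + s.
Let rk (s : 'I_n) := #|[pred u | k u < k s]|.

Lemma k_inj : injective k.
Proof.
move=> s s'; rewrite /k => e.
have : (i s * n + s) %% n = (i s' * n + s') %% n by rewrite e.
rewrite !modnMDl !modn_small // => e'; exact: val_inj.
Qed.

Lemma rk_lt s : rk s < n.
Proof.
rewrite /rk -[X in _ < X]card_ord; apply: proper_card.
apply/properP; split; first exact: subset_predT.
by exists s => //=; rewrite inE ltnn.
Qed.

Lemma rk_mono s s' : k s < k s' -> rk s < rk s'.
Proof.
move=> lt; rewrite /rk; apply: proper_card; apply/properP; split.
  by apply/fintype.subsetP => u; rewrite !inE => /ltn_trans; apply.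
by exists s; rewrite !inE ?ltnn.
Qed.

Definition rkO s : 'I_n := Ordinal (rk_lt s).

Lemma rkO_inj : injective rkO.
Proof.
move=> s s' /(congr1 val) /= e.
case: (ltngtP (k s) (k s')) => [/rk_mono|/rk_mono|/k_inj //]; rewrite e ltnn //.
Qed.

Lemma exists_pi :
  (forall a : nat, 0 < a < m -> a <= #|[pred s | i s < a]|) ->
  exists pi : {perm 'I_n}, forall t, i (pi t) <= t.
Proof.
move=> Ha; exists (perm rkO_inj)^-1%g => t.
set s := _ t.
have rs : rk s = t by have := permKV (perm rkO_inj) t; rewrite permE => /(congr1 val).
rewrite leqNgt; apply/negP => lt.
have /Ha : 0 < t.+1 < m by have := ltn_ord (i s); lia.
have sub : [pred u | i u < t.+1] \subset [pred u | k u < k s].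
  apply/fintype.subsetP => u; rewrite !inE /k => iu.
  have h1 : (i u).+1 * n <= i s * n by apply: leq_mul => //; lia.
  have := ltn_ord u; rewrite mulSn in h1.
  move: h1; move: (i u * n) (i s * n) => A B; lia.
have := subset_leq_card sub; rewrite -/(rk s) rs => h2 h3; by move: (leq_trans h3 h2); rewrite ltnn.
Qed.
End Comb.

Section Count.
Variables (n m : nat).
Implicit Types (i : {ffun 'I_n -> 'I_m}).

Lemma weight_sum (w : 'I_m -> nat) :
  \sum_(i : {ffun 'I_n -> 'I_m}) \prod_(s : 'I_n) w (i s) = (\sum_v w v) ^ n.
Proof.
rewrite -(bigA_distr_bigA (fun (s : 'I_n) v => w v)) /=.
by rewrite prod_nat_const card_ord.
Qed.

Lemma markov (P : pred {ffun 'I_n -> 'I_m}) (w : 'I_m -> nat) L :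
  (forall i, P i -> L <= \prod_s w (i s)) -> #|P| * L <= (\sum_v w v) ^ n.
Proof.
move=> HL; rewrite -weight_sum -sum_nat_const [X in _ <= X](bigID P) /=.
apply: (leq_trans _ (leq_addr _ _)); apply: leq_sum => i /HL //.
Qed.

Lemma wsum a c : a <= m ->
  \sum_(v : 'I_m) (if v < a then c else 2) = c * a + 2 * (m - a).
Proof.
move=> am; rewrite -(big_mkord xpredT (fun v => if v < a then c else 2)).
rewrite (@big_cat_nat _ _ _ a 0 m _ _ (leq0n a) am) /=.
rewrite (eq_big_nat _ _ (F2 := fun=> c)); last by move=> v /andP[_ ->].
rewrite [X in _ + X](eq_big_nat _ _ (F2 := fun=> 2)); last first.
  by move=> v /andP[av _]; rewrite ltnNge av.
by rewrite !sum_nat_const_nat subn0 mulnC [2 * _]mulnC.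
Qed.

Lemma wprod a c i :
  \prod_(s : 'I_n) (if i s < a then c else 2) =
  c ^ #|[pred s | i s < a]| * 2 ^ (n - #|[pred s | i s < a]|).
Proof.
rewrite (bigID (fun s => i s < a)) /=.
rewrite (eq_bigr (fun=> c)); last by move=> s ->.
rewrite [X in _ * X](eq_bigr (fun=> 2)); last by move=> s /negbTE ->.
rewrite -(prod_nat_const [pred s | i s < a]).
have -> : n - #|[pred s | i s < a]| = #|[predC [pred s | i s < a]]|.
  have := cardC [pred s | i s < a]; rewrite card_ord => h; rewrite -{1}h addKn //.
rewrite -(prod_nat_const [predC [pred s | i s < a]]).
congr (_ * _); by apply: eq_bigl => s; rewrite !inE.
Qed.

Definition bad (a : nat) := [pred i : {ffun 'I_n -> 'I_m} | (0 < a) && (#|[pred s | i s < a]| < a)].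

Definition goodp := [pred i : {ffun 'I_n -> 'I_m} |
  [forall a : 'I_m, (0 < a) ==> (a <= #|[pred s | i s < a]|)]].

Lemma badsum : #|[predC goodp]| <= \sum_(a < m) #|bad a|.
Proof.
have e : forall i, i \in [predC goodp] -> 1 <= \sum_(a < m) (i \in bad a).
  move=> i; rewrite inE /= negb_forall => /existsP [a]; rewrite negb_imply -ltnNge => /andP [a0 lt].
  by rewrite (bigD1 a) //= inE /= a0 lt.
rewrite -[#|[predC goodp]|]sum1_card.
apply: (@leq_trans (\sum_(i in [predC goodp]) \sum_(a < m) (i \in bad a))).
  by apply: leq_sum.
apply: (@leq_trans (\sum_i \sum_(a < m) (i \in bad a))).
  by rewrite [X in _ <= X](bigID [predC goodp]) /= leq_addr.
rewrite exchange_big; apply: leq_sum => a _ /=.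
rewrite -sum1_card [X in _ <= X]big_mkcond /=; apply: leq_sum => i _.
by case: (i \in _).
Qed.

Lemma bad1 : 1 <= m -> #|bad 1| * 2 ^ n <= (2 * (m - 1)) ^ n.
Proof.
move=> m1.
have := @markov (bad 1) (fun v => if v < 1 then 0 else 2) (2 ^ n).
rewrite wsum // mul0n add0n; apply => i; rewrite inE /= => /ltnSE c0.
rewrite wprod; move: c0; rewrite leqn0 => /eqP ->; by rewrite subn0 expn0 mul1n.
Qed.

Lemma bad_b (b : nat) : b < m -> #|bad b.+1| * 2 ^ (n - b) <= (2 * m - b.+1) ^ n.
Proof.
move=> bm.
have := @markov (bad b.+1) (fun v => if v < b.+1 then 1 else 2) (2 ^ (n - b)).
rewrite wsum // mul1n (_ : b.+1 + 2 * (m - b.+1) = 2 * m - b.+1); last by lia.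
apply => i; rewrite inE /= => /ltnSE cb.
by rewrite wprod exp1n mul1n leq_pexp2l //; apply: leq_sub2l.
Qed.
End Count.

Local Open Scope classical_set_scope.
Local Open Scope ring_scope.

Section Real.
Variable R : realFieldType.

Lemma bern (x : R) k : -1 <= x -> 1 + k%:R * x <= (1 + x) ^+ k.
Proof.
move=> x1; elim: k => [|k IH]; first by rewrite mul0r addr0 expr0.
rewrite exprS.
have h0 : 0 <= 1 + x by lra.
apply: (le_trans _ (ler_wpM2l h0 IH)); rewrite -natr1.
have : 0 <= k%:R * x * x :> R by rewrite -mulrA mulr_ge0 // -expr2 sqr_ge0.
nra.
Qed.

Lemma half (M : nat) : (0 < M)%N -> (1 - M%:R^-1) ^+ M <= 2^-1 :> R.
Proof.
move=> M0.
have Mp : 0 < M%:R :> R by rewrite ltr0n.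
set u := M%:R^-1.
have u0 : 0 < u by rewrite invr_gt0.
have u1 : u <= 1 by rewrite invf_le1 // ler1n.
have p1 : (1 - u) ^+ M * (1 + u) ^+ M <= 1.
  rewrite -exprMn; apply: exprn_ile1; nra.
have p2 : 2 <= (1 + u) ^+ M.
  have hb : -1 <= u by lra.
  apply: (le_trans _ (bern M hb)).
  by rewrite /u mulfV ?gt_eqF.
have q0 : 0 <= (1 - u) ^+ M by apply: exprn_ge0; lra.
have : (1 - u) ^+ M * 2 <= (1 - u) ^+ M * (1 + u) ^+ M by apply: ler_wpM2l.
move: q0 p1; move: ((1 - u) ^+ M) ((1 + u) ^+ M) => A B; lra.
Qed.

Lemma half_ge0 k : 0 <= (2^-1 : R) ^+ k.
Proof. by apply: exprn_ge0; rewrite invr_ge0. Qed.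

Lemma half_mono k l : (k <= l)%N -> (2^-1 : R) ^+ l <= (2^-1) ^+ k.
Proof.
move=> kl; apply: ler_wiXn2l => //.
all: first [by rewrite invr_ge0 | by rewrite invf_le1 //; lra].
Qed.

Lemma R1 (m n : nat) : (2 <= m)%N -> (10 * m <= n)%N ->
  ((m - 1)%:R ^+ n : R) <= m%:R ^+ n * (2^-1) ^+ 8.
Proof.
move=> m2 nm.
have mp : 0 < m%:R :> R by rewrite ltr0n; lia.
set y : R := 1 - m%:R^-1.
have y0 : 0 <= y by rewrite subr_ge0 invf_le1 // ler1n; lia.
have y1 : y <= 1 by rewrite lerBlDr lerDl invr_ge0 ltW.
have e : (m - 1)%:R = m%:R * y :> R.
  by rewrite natrB; last lia; rewrite /y mulrBr mulr1 mulfV ?gt_eqF.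
rewrite e exprMn; apply: ler_wpM2l; first by rewrite exprn_ge0 // ltW.
have h1 : y ^+ n <= y ^+ (m * 10) by apply: ler_wiXn2l => //; lia.
have h2 : y ^+ (m * 10) <= (2^-1) ^+ 10.
  by rewrite exprM; apply: lerXn2r; rewrite ?nnegrE ?exprn_ge0 ?invr_ge0 //; apply: half; lia.
by apply: (le_trans h1); apply: (le_trans h2); apply: half_mono.
Qed.
Lemma two_half k : (2 : R) ^+ k * (2^-1) ^+ k = 1.
Proof. by rewrite -exprMn divff ?expr1n // pnatr_eq0. Qed.

Lemma R2 (m n a : nat) : (2 <= a)%N -> (a < m)%N -> (10 * m <= n)%N ->
  ((2 * m - a)%:R ^+ n : R) * (2^-1) ^+ (n - a.-1) <= m%:R ^+ n * (2^-1) ^+ (a + 7).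
Proof.
move=> a2 am nm.
have Mp : 0 < (2 * m)%:R :> R by rewrite ltr0n; lia.
set z : R := 1 - (2 * m)%:R^-1.
have z0 : 0 <= z by rewrite subr_ge0 invf_le1 // ler1n; lia.
have z1 : z <= 1 by rewrite lerBlDr lerDl invr_ge0 ltW.
have e1 : (2 * m - a)%:R <= (2 * m)%:R * z ^+ a :> R.
  have hb : -1 <= - (2 * m)%:R^-1 :> R.
    by rewrite lerN2 invf_le1 // ler1n; lia.
  have hz := bern a hb; rewrite -/z in hz.
  rewrite natrB; last lia.
  apply: (le_trans _ (ler_wpM2l (ltW Mp) hz)).
  by rewrite mulrDr mulr1 !mulrN mulrCA mulfV ?gt_eqF // mulr1.
have e2 : ((2 * m - a)%:R ^+ n : R) <= ((2 * m)%:R * z ^+ a) ^+ n.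
  by apply: lerXn2r => //; rewrite nnegrE ?mulr_ge0 ?exprn_ge0 ?ler0n.
have hK : n = ((n - a.-1) + a.-1)%N by lia.
set K := (n - a.-1)%N.
have e3 : ((2 * m)%:R * z ^+ a) ^+ n * (2^-1) ^+ K =
          m%:R ^+ n * (2 ^+ a.-1 * z ^+ (a * n)) :> R.
  rewrite exprMn natrM exprMn -exprM.
  have -> : (2%:R : R) ^+ n = 2 ^+ K * 2 ^+ a.-1 by rewrite -exprD -hK.
  transitivity ((2 ^+ K * (2^-1) ^+ K) * (m%:R ^+ n * (2 ^+ a.-1 * z ^+ (a * n))) : R).
    ring.
  by rewrite two_half mul1r.
apply: (le_trans (ler_wpM2r (half_ge0 K) e2)); rewrite e3.
apply: ler_wpM2l; first by rewrite exprn_ge0 // ler0n.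
have e4 : z ^+ (a * n) <= (2^-1) ^+ (5 * a).
  apply: (le_trans (y := z ^+ (a * (5 * (2 * m))))).
    by apply: ler_wiXn2l => //; apply: leq_mul => //; lia.
  rewrite (_ : a * (5 * (2 * m)) = 2 * m * 5 * a)%N; last by lia.
  rewrite (exprM z (2 * m * 5) a) (exprM z (2 * m) 5) (exprM _ 5 a).
  apply: lerXn2r; rewrite ?nnegrE ?exprn_ge0 ?invr_ge0 //.
  apply: lerXn2r; rewrite ?nnegrE ?exprn_ge0 ?invr_ge0 //.
  apply: half; lia.
apply: (le_trans (ler_wpM2l (exprn_ge0 _ (ler0n _ 2)) e4)).
rewrite (_ : 5 * a = a.-1 + (4 * a + 1))%N; last by lia.
rewrite exprD mulrA two_half mul1r; apply: half_mono; lia.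
Qed.
End Real.

Section T.
Context {d : measure_display} {X : measurableType d} {R : realType}.

Lemma er_mes (h : X -> bool) : measurable_fun setT h ->
  measurable [set xy : X * bool | h xy.1 != xy.2].
Proof.
move=> mh.
have -> : [set xy : X * bool | h xy.1 != xy.2] =
  (h @^-1` [set true] `*` [set false]) `|` (h @^-1` [set false] `*` [set true]).
  apply/seteqP; split => -[x b] /=.
    by case: (h x); case: b => //= _; [left|right].
  by case => -[/= -> ->].
have mT := mh measurableT [set true] I; have mF := mh measurableT [set false] I.
rewrite setTI in mT; rewrite setTI in mF.
by apply: measurableU; apply: measurableX.
Qed.

Lemma er_01 (P : probability (X * bool)%type R) h : measurable_fun setT h ->
  0 <= er P h <= 1.
Proof.
move=> mh; rewrite /er; apply/andP; split; first by apply: fine_ge0.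
have h1 := probability_le1 P (er_mes mh).
have h0 := measure_ge0 P [set xy : X * bool | h xy.1 != xy.2].
move: h0 h1; case: (P _) => //= r; rewrite ?lee_fin //.
Qed.

Lemma excess_01 (H : set (X -> bool)) (Hm : forall h, H h -> measurable_fun setT h)
  (P : probability (X * bool)%type R) h : H h -> 0 <= excess H P h <= 1.
Proof.
move=> Hh; rewrite /excess.
have lb : lbound [set er P h' | h' in H] 0.
  by move=> _ [h' Hh' <-]; case/andP: (er_01 P (Hm h' Hh')).
have ne : nonempty [set er P h' | h' in H] by exists (er P h), h.
have i0 : 0 <= inf [set er P h' | h' in H] by apply: lb_le_inf.
have i1 : inf [set er P h' | h' in H] <= er P h.
  by apply: ge_inf; [exists 0 | exists h].
case/andP: (er_01 P (Hm h Hh)) => _ e1.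
apply/andP; split; first by rewrite subr_ge0.
by apply: le_trans e1; rewrite lerBlDr lerDl.
Qed.

Lemma transfer_mono (H : set (X -> bool)) (Hm : forall h, H h -> measurable_fun setT h)
  C (P D : probability (X * bool)%type R) r1 r2 :
  has_transfer_exponent H C P D r1 -> 0 < r2 -> r1 <= r2 ->
  has_transfer_exponent H C P D r2.
Proof.
move=> [r1p [C2 HT]] r2p r12; split => //; split => // h Hh.
apply: le_trans (HT h Hh) _.
have C0 : 0 <= C by apply: le_trans C2.
apply: ler_wpM2l => //.
case/andP: (excess_01 Hm P Hh); rewrite le_eqVlt => /orP [/eqP <- | e0] e1.
  by rewrite !powR0 // invr_eq0 gt_eqF.
apply: ger_powR; first by rewrite e0 e1.
by rewrite lef_pV2 ?posrE.
Qed.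
End T.


Section Geo.
Variable R : realFieldType.
Lemma geo K : \sum_(a < K) (2^-1 : R) ^+ a + 2 * (2^-1) ^+ K = 2.
Proof.
elim: K => [|K IH]; first by rewrite big_ord0 add0r expr0 mulr1.
rewrite big_ord_recr /= exprS -[RHS]IH -addrA; congr (_ + _).
rewrite mulrA divff ?pnatr_eq0 // mul1r; ring.
Qed.
End Geo.

Theorem lemmaD2 (d : measure_display) (X : measurableType d) (R : realType)
  (H : set (X -> bool))
  (Hmeas : forall h, H h -> measurable_fun setT h)
  (C : R) (D : probability (X * bool)%type R)
  (N : nat) (HN : (10 <= N.+1)%N)
  (rho : 'I_N.+1 -> R) (P : 'I_N.+1 -> probability (X * bool)%type R)
  (HP : forall t, has_transfer_exponent H C (P t) D (rho t))
  (sigma : {perm 'I_N.+1})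
  (Hsort : forall s t : 'I_N.+1, (s <= t)%N -> rho (sigma s) <= rho (sigma t)) :
  let m := (N.+1 %/ 10)%N in
  (* index i : 'I_m (0-based) of the draw stands for i+1 in {1,...,m};
     Q_t = P_(i_t) = P (sigma i_t) *)
  let Q (i : {ffun 'I_N.+1 -> 'I_m}) (t : 'I_N.+1) := P (sigma (inord (i t))) in
  (97 / 100 : R) <=
    (#|[pred i : {ffun 'I_N.+1 -> 'I_m} |
        asbool (exists pi : {perm 'I_N.+1}, forall t : 'I_N.+1,
              (i (pi t) <= t)%N /\
              has_transfer_exponent H C (Q i (pi t)) D (rho (sigma t)))]|%:R
     / (m ^ N.+1)%:R).
Proof.
cbv zeta.
set m := (N.+1 %/ 10)%N.
have m1 : (1 <= m)%N by rewrite /m divn_gt0.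
have nm : (10 * m <= N.+1)%N by rewrite mulnC leq_trunc_div.
have mn : (m <= N.+1)%N by rewrite leq_div.
set Good := [pred i | asbool _].
have sub : goodp N.+1 m \subset Good.
  apply/fintype.subsetP => i; rewrite inE => /forallP Hi; rewrite inE; apply/asboolP.
  have [pi Hpi] : exists pi : {perm 'I_N.+1}, forall t, (i (pi t) <= t)%N.
    by apply: exists_pi => a /andP[a0 am]; have := Hi (Ordinal am); rewrite /= a0.
  apply: asboolT; exists pi => t; split => //.
  have hr : 0 < rho (sigma t) by case: (HP (sigma t)).
  apply: (transfer_mono Hmeas (HP _) hr).
  apply: Hsort; rewrite inordK //; apply: leq_trans (ltn_ord _) _; exact: mn.
have cardG := subset_leq_card sub.
have tot : (#|goodp N.+1 m| + #|[predC goodp N.+1 m]| = m ^ N.+1)%N.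
  by rewrite cardC card_ffun !card_ord.
have bs := badsum N.+1 m.
have rb : forall a : 'I_m, (#|bad N.+1 m a|%:R : R) <= m%:R ^+ N.+1 * (2^-1) ^+ (a + 7).
  move=> [a am] /=.
  have mp : (0 <= m%:R ^+ N.+1 :> R) by rewrite exprn_ge0.
  case: a am => [|b] am.
    rewrite (_ : #|bad N.+1 m 0| = 0%N); first by rewrite mulr_ge0 ?half_ge0.
    by apply: eq_card0 => i; rewrite inE.
  case: b am => [|b] am.
    have h1 := bad1 N.+1 m1.
    rewrite expnMn mulnC leq_pmul2l ?expn_gt0 // in h1.
    apply: (le_trans (y := ((m - 1) ^ N.+1)%:R)); first by rewrite ler_nat.
    by rewrite natrX; apply: R1.
  have h2 := bad_b N.+1 (ltnW am).
  have e : (#|bad N.+1 m b.+2|%:R : R) =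
     (#|bad N.+1 m b.+2| * 2 ^ (N.+1 - b.+1))%:R * (2^-1) ^+ (N.+1 - b.+1).
    by rewrite natrM natrX -mulrA two_half mulr1.
  rewrite e; apply: (le_trans _ (R2 _ _ am nm)) => //.
  apply: ler_wpM2r; first exact: half_ge0.
  by rewrite -natrX ler_nat.
have bsR : (#|[predC goodp N.+1 m]|%:R : R) <= m%:R ^+ N.+1 * (2^-1) ^+ 7 * 2.
  apply: (le_trans (y := (\sum_(a < m) #|bad N.+1 m a|)%:R)); first by rewrite ler_nat.
  rewrite natr_sum.
  apply: (le_trans (y := \sum_(a < m) m%:R ^+ N.+1 * (2^-1) ^+ 7 * (2^-1) ^+ a)).
    by apply: ler_sum => a _; rewrite -mulrA -exprD addnC.
  rewrite -mulr_sumr; apply: ler_wpM2l; first by rewrite mulr_ge0 ?half_ge0 ?exprn_ge0.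
  have := @geo R m; have := @half_ge0 R m; lra.
have h7 : (2^-1 : R) ^+ 7 = 128%:R^-1 by rewrite exprVn -natrX.
have mp : (0 < (m ^ N.+1)%:R :> R) by rewrite ltr0n expn_gt0 m1.
rewrite ler_pdivlMr //.
have : ((m ^ N.+1)%:R : R) = #|goodp N.+1 m|%:R + #|[predC goodp N.+1 m]|%:R by rewrite -natrD tot.
have : (#|goodp N.+1 m|%:R : R) <= #|Good|%:R by rewrite ler_nat.
rewrite h7 natrX in bsR *.
move: bsR mp; rewrite natrX.
move: (m%:R ^+ N.+1 : R) (#|Good|%:R : R) (#|goodp N.+1 m|%:R : R) (#|[predC goodp N.+1 m]|%:R : R) => A B Cc E.
lra.
Qed.
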